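(* Let $\boldsymbol z,\boldsymbol m\in\{0,1\}^n$ and $\boldsymbol y\in\overline{\mathbb R}^n$ with $y_i\in\mathbb R$ if $m_i=1$ and $y_i\in\{+\infty,-\infty\}$ if $m_i=0$. Let $\mathcal N_{11}=\{j:z_j=m_j=1\}$, $n_{11}=|\mathcal N_{11}|$, and write $\mathcal N_{11}=\{j_1,\dots,j_{n_{11}}\}$ with $\mathrm{rank}_{j_1}(\boldsymbol y)<\dots<\mathrm{rank}_{j_{n_{11}}}(\boldsymbol y)$. For an integer $0\le L\le n_{11}$, $c\in\mathbb R$ and $\kappa>0$, let $\mathcal H_L=\{\boldsymbol\delta\in\mathbb R^n:\sum_{i\in\mathcal N_{11}}\mathbf 1(\delta_i>c)\le L\}$, $\mathcal A_L=\{j_{n_{11}-L+1},\dots,j_{n_{11}}\}$ if $L\ge1$ and $\mathcal A_0=\emptyset$, $\gamma=\max\{y_i:z_i=m_i=1\}-\min\{y_i:z_i=0,m_i=1\}+\kappa$, and $\boldsymbol\eta_L\in\mathbb R^n$ with $\eta_{L,i}=\gamma$ for $i\in\mathcal A_L$ and $\eta_{L,i}=c$ otherwise. Then $$\inf_{\boldsymbol\delta\in\mathcal H_L}t_{\mathrm R,\phi}(\boldsymbol z,\boldsymbol y-\boldsymbol z\circ\boldsymbol m\circ\boldsymbol\delta)=t_{\mathrm R,\phi}(\boldsymbol z,\boldsymbol y-\boldsymbol z\circ\boldsymbol m\circ\boldsymbol\eta_L)$$ for either the rank-sum or the Mann–Whitney-type statistic.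
   Context: $\overline{\mathbb R}=\mathbb R\cup\{\pm\infty\}$; $\circ$ is the entrywise product (with $0\cdot\delta_i=0$, so coordinates with $z_im_i=0$ are unchanged). For $1\le i,j\le n$ and $y,y'\in\overline{\mathbb R}$, $\psi_{i,j}(y,y')=\mathbf 1\{y>y'\}+\mathbf 1\{y=y'\}\mathbf 1\{i\ge j\}$; $\mathrm{rank}_i(\boldsymbol y)=\sum_{j=1}^n\psi_{i,j}(y_i,y_j)$. $\phi$ is a fixed nondecreasing real function on the nonnegative integers. Rank-sum statistic $t_{\mathrm R,\phi}(\boldsymbol z,\boldsymbol y)=\sum_iz_i\phi(\mathrm{rank}_i(\boldsymbol y))$; Mann–Whitney-type statistic $t_{\mathrm R,\phi}(\boldsymbol z,\boldsymbol y)=\sum_iz_i\phi(\sum_j(1-z_j)\psi_{i,j}(y_i,y_j))$. *)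

(* Defs.v *)
From mathcomp Require Import all_boot all_order all_algebra.
From mathcomp Require Import boolp classical_sets reals constructive_ereal.
Set Implicit Arguments. Unset Strict Implicit. Unset Printing Implicit Defensive.
Import Order.TTheory GRing.Theory Num.Theory.
Local Open Scope ring_scope.

Section Defs.
Variables (R : realType) (n : nat).

Definition psi (i j : 'I_n) (y y' : \bar R) : nat :=
  ((y' < y)%E : nat) + ((y == y') && (j <= i)%N : nat).

Definition rank (y : 'I_n -> \bar R) (i : 'I_n) : nat :=
  (\sum_(j < n) psi i j (y i) (y j))%N.

Definition t_rank (phi : nat -> R) (z : 'I_n -> bool) (y : 'I_n -> \bar R) : R :=
  \sum_(i < n) (z i)%:R * phi (rank y i).

Definition t_mw (phi : nat -> R) (z : 'I_n -> bool) (y : 'I_n -> \bar R) : R :=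
  \sum_(i < n) (z i)%:R * phi (\sum_(j < n) (1 - z j) * psi i j (y i) (y j))%N.

Definition shift (z m : 'I_n -> bool) (y : 'I_n -> \bar R) (d : 'I_n -> R)
  : 'I_n -> \bar R :=
  fun i => (y i - ((z i)%:R * (m i)%:R * d i)%:E)%E.

Definition N11 (z m : 'I_n -> bool) : {set 'I_n} := [set i | z i && m i].

Definition H_L (z m : 'I_n -> bool) (c : R) (L : nat) : set ('I_n -> R) :=
  [set d : 'I_n -> R | (\sum_(i in N11 z m) (((c < d i)%R : bool) : nat) <= L)%N].

Definition N11_sorted (z m : 'I_n -> bool) (y : 'I_n -> \bar R) : seq 'I_n :=
  sort (fun a b => (rank y a <= rank y b)%N) (enum (N11 z m)).

Definition A_L (z m : 'I_n -> bool) (y : 'I_n -> \bar R) (L : nat) : seq 'I_n :=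
  drop (#|N11 z m| - L) (N11_sorted z m y).

(* The max/min are taken in \bar R and converted with [fine]; since the
   relevant y_i are finite this is the real max/min (empty-set convention). *)
Definition gamma (z m : 'I_n -> bool) (y : 'I_n -> \bar R) (kappa : R) : R :=
  fine (\big[Order.max/-oo%E]_(i | z i && m i) y i)
  - fine (\big[Order.min/+oo%E]_(i | ~~ z i && m i) y i) + kappa.

Definition eta_L (z m : 'I_n -> bool) (y : 'I_n -> \bar R) (L : nat) (c kappa : R)
  : 'I_n -> R :=
  fun i => if i \in A_L z m y L then gamma z m y kappa else c.

End Defs.

(* Main.v *)
Require Import Defs.
From mathcomp Require Import all_boot all_order all_algebra.
From mathcomp Require Import boolp classical_sets reals constructive_ereal.
From mathcomp Require Import zify ring lra.
Set Implicit Arguments. Unset Strict Implicit. Unset Printing Implicit Defensive.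
Import Order.TTheory GRing.Theory Num.Theory.
Local Open Scope ring_scope.

Section Gen.
Variables (R : realType) (n : nat).

Definition ordk (a : \bar R) (i : nat) (b : \bar R) (j : nat) : bool :=
  ((a < b)%E || ((a == b) && (i <= j)%N)).

Lemma ordk_refl a i : ordk a i a i.
Proof. by rewrite /ordk eqxx leqnn orbT. Qed.

Lemma ordk_trans a i b j c k : ordk a i b j -> ordk b j c k -> ordk a i c k.
Proof.
rewrite /ordk => /orP[ab|/andP[/eqP ab ij]] /orP[bc|/andP[/eqP bc jk]].
- by rewrite (lt_trans ab bc).
- by rewrite -bc ab.
- by rewrite ab bc.
- by rewrite ab bc eqxx (leq_trans ij jk) orbT.
Qed.

Lemma ordk_total a i b j : ordk a i b j || ordk b j a i.
Proof.
rewrite /ordk; case: (ltgtP a b) => //= [e].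
idtac.
by case: (leqP i j) => // /ltnW ->; rewrite orbT.
Qed.

Lemma ordk_anti a i b j : ordk a i b j -> ordk b j a i -> (a = b) /\ i = j.
Proof.
rewrite /ordk => /orP[ab|/andP[/eqP-> ij]] /orP[ba|/andP[/eqP ba ji]].
- by move: (lt_trans ab ba); rewrite ltxx.
- by move: ab; rewrite ba ltxx.
- by move: ba; rewrite ltxx.
- by split => //; apply/eqP; rewrite eqn_leq ij ji.
Qed.

Definition le (w : 'I_n -> \bar R) (l i : 'I_n) : bool := ordk (w l) l (w i) i.

Lemma psiE (w : 'I_n -> \bar R) i j : psi i j (w i) (w j) = le w j i.
Proof.
rewrite /psi /le /ordk eq_sym.
by case: ltgtP => //=; case: (_ <= _)%N.
Qed.

Lemma le_refl (w : 'I_n -> \bar R) i : le w i i.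
Proof. exact: ordk_refl. Qed.
Lemma le_trans (w : 'I_n -> \bar R) i j k : le w i j -> le w j k -> le w i k.
Proof. exact: ordk_trans. Qed.
Lemma le_total (w : 'I_n -> \bar R) i j : le w i j || le w j i.
Proof. exact: ordk_total. Qed.
Lemma le_anti (w : 'I_n -> \bar R) i j : le w i j -> le w j i -> i = j.
Proof. by move=> a b; case: (ordk_anti a b) => _ /val_inj. Qed.

Lemma rankE (w : 'I_n -> \bar R) i : rank w i = (\sum_(l < n) le w l i)%N.
Proof. by apply: eq_bigr => l _; rewrite psiE. Qed.

Lemma rank_le (w : 'I_n -> \bar R) l i : le w l i -> (rank w l <= rank w i)%N.
Proof.
move=> li; rewrite !rankE; apply: leq_sum => k _.
by case: (boolP (le w k l)) => // kl; rewrite (le_trans kl li).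
Qed.

Lemma rank_lt (w : 'I_n -> \bar R) l i : ~~ le w l i -> (rank w i < rank w l)%N.
Proof.
move=> nli; have il : le w i l by move: (le_total w l i); rewrite (negbTE nli).
rewrite !rankE (bigD1 l) // [X in (_ < X)%N](bigD1 l) //.
rewrite (negbTE nli) le_refl /= add1n ltnS add0n.
apply: leq_sum => k _.
by case: (boolP (le w k i)) => // ki; rewrite (le_trans ki il).
Qed.

Lemma le_rank (w : 'I_n -> \bar R) l i : (rank w l <= rank w i)%N -> le w l i.
Proof.
move=> h; apply/negPn/negP => /rank_lt; by rewrite ltnNge h.
Qed.

Lemma rank_inj (w : 'I_n -> \bar R) : injective (rank w).
Proof.
move=> i j e; apply: (le_anti (w := w)); apply: le_rank; by rewrite e.
Qed.

Lemma rank_bnd (w : 'I_n -> \bar R) i : (0 < rank w i <= n)%N.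
Proof.
rewrite rankE; apply/andP; split.
  by rewrite (bigD1 i) // le_refl.
apply: (@leq_trans (\sum_(l < n) 1)%N); first by apply: leq_sum => l _; case: le.
by rewrite sum1_card card_ord.
Qed.

Lemma sum_rank (F : nat -> R) (w : 'I_n -> \bar R) : \sum_(i < n) F (rank w i) = \sum_(i < n) F i.+1.
Proof.
have hlt i : ((rank w i).-1 < n)%N.
  by case/andP: (rank_bnd w i); case: (rank w i).
pose h (i : 'I_n) : 'I_n := Ordinal (hlt i).
have hinj : injective h.
  move=> i j /(congr1 val) /= e; apply: (rank_inj (w := w)).
  by move: (rank_bnd w i) (rank_bnd w j) e; lia.
rewrite [RHS](reindex_inj hinj) /=; apply: eq_bigr => i _.
by move: (rank_bnd w i); case: (rank w i).
Qed.

End Gen.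
Section Core.
Variables (R : realType) (n : nat) (z : 'I_n -> bool).
Implicit Types (v w : 'I_n -> \bar R).

Definition Cc v i : nat := (\sum_(l < n) (~~ z l) * le v l i)%N.
Definition Qc v j : nat := (\sum_(l < n) (z l) * le v l j)%N.
Definition Pc v j : nat := (\sum_(l < n) (z l) * le v j l)%N.

Lemma Cc_mono v i k : le v i k -> (Cc v i <= Cc v k)%N.
Proof.
move=> ik; apply: leq_sum => l _; case: (boolP (le v l i)) => li; last by rewrite muln0.
by rewrite (le_trans li ik).
Qed.

Lemma Cc_strict v i k l : le v i k -> ~~ z l -> le v l k -> ~~ le v l i ->
  (Cc v i < Cc v k)%N.
Proof.
move=> ik zl lk nli; rewrite /Cc (bigD1 l) // [X in (_ < X)%N](bigD1 l) //.
rewrite (negbTE nli) zl lk /= muln0 muln1 add0n add1n ltnS.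
apply: leq_sum => j _; case: (boolP (le v j i)) => ji; last by rewrite muln0.
by rewrite (le_trans ji ik).
Qed.

Lemma Cc_max v i : (0 < Cc v i)%N ->
  exists jm, [/\ ~~ z jm, le v jm i & (Cc v i <= Cc v jm)%N].
Proof.
move=> pos.
case: (boolP [exists l, ~~ z l && le v l i]) => [/existsP[l0 hl0]|none]; last first.
  move: pos; rewrite /Cc big1 // => l _.
  by move: none => /existsPn /(_ l); case: (~~ z l); case: (le v l i).
case: (@arg_maxnP _ l0 (fun j => ~~ z j && le v j i) (Cc v) hl0) => jm /andP[zjm jmi] hmax.
exists jm; split => //.
apply: leq_sum => l _; case: (boolP (~~ z l)) => zl; last by rewrite !mul0n.
case: (boolP (le v l i)) => li; last by rewrite muln0.
have hl : (Cc v l <= Cc v jm)%N by apply: hmax; rewrite zl li.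
case: (boolP (le v l jm)) => // nljm.
have jml : le v jm l by move: (le_total v l jm); rewrite (negbTE nljm).
by move: (Cc_strict jml zl (le_refl v l) nljm); rewrite ltnNge hl.
Qed.

Lemma QP v j : ~~ z j -> (Qc v j + Pc v j = \sum_(l < n) (z l : nat))%N.
Proof.
move=> zj; rewrite /Qc /Pc -big_split /=; apply: eq_bigr => l _.
case: (boolP (z l)) => zl; last by rewrite !mul0n.
have lj : l != j by apply: contraNneq zj => <-.
rewrite !mul1n; case: (boolP (le v l j)) => a; case: (boolP (le v j l)) => b //=.
- by move: lj; rewrite (le_anti a b) eqxx.
- by move: (le_total v l j); rewrite (negbTE a) (negbTE b).
Qed.

Lemma rank_ctrl v j : rank v j = (Cc v j + Qc v j)%N.
Proof.
rewrite rankE /Cc /Qc -big_split /=; apply: eq_bigr => l _.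
by case: (z l); rewrite /= ?mul0n ?mul1n ?addn0.
Qed.

Variables (w w' : 'I_n -> \bar R).
Hypothesis hw : forall j, ~~ z j -> w j = w' j.
Hypothesis hQ : forall j, ~~ z j -> (Qc w j <= Qc w' j)%N.

Lemma le_ctrl l j : ~~ z l -> ~~ z j -> le w l j = le w' l j.
Proof. by move=> zl zj; rewrite /le hw // hw. Qed.

Lemma Cc_ctrl j : ~~ z j -> Cc w j = Cc w' j.
Proof.
move=> zj; apply: eq_bigr => l _; case: (boolP (z l)) => zl; first by rewrite !mul0n.
by rewrite le_ctrl.
Qed.

Lemma Pc_le j : ~~ z j -> (Pc w' j <= Pc w j)%N.
Proof.
move=> zj; move: (QP w zj) (QP w' zj) (hQ zj); lia.
Qed.

Definition Gc v s : nat := (\sum_(i < n) (z i && (s < Cc v i)%N))%N.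

Lemma Gc_le s : (Gc w' s <= Gc w s)%N.
Proof.
case: (boolP [exists i, z i && (s < Cc w' i)%N]) => [/existsP[i0 hi0]|none]; last first.
  rewrite /Gc big1 // => i _.
  by move: none => /existsPn /(_ i); case: (_ && _).
have [jm [zjm jmi0 hjm]] : exists jm, [/\ ~~ z jm, le w' jm i0 & (Cc w' i0 <= Cc w' jm)%N].
  by apply: Cc_max; case/andP: hi0 => _; apply: leq_ltn_trans.
have Pjm : ~~ z jm && (s < Cc w jm)%N.
  by rewrite zjm Cc_ctrl //=; case/andP: hi0 => _ h; apply: (leq_trans h).
case: (@arg_minnP _ jm (fun j => ~~ z j && (s < Cc w j)%N) (Cc w) Pjm) => js /andP[zjs sjs] hmin.
have claim1 : forall i, z i && (s < Cc w' i)%N -> le w' js i.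
  move=> i /andP[zi si].
  have [jm2 [zjm2 jm2i hjm2]] : exists jm, [/\ ~~ z jm, le w' jm i & (Cc w' i <= Cc w' jm)%N].
    by apply: Cc_max; apply: leq_ltn_trans si.
  have h2 : (Cc w js <= Cc w jm2)%N.
    by apply: hmin; rewrite zjm2 Cc_ctrl //=; apply: (leq_trans si).
  have : le w js jm2.
    case: (boolP (le w js jm2)) => // n2.
    have j2s : le w jm2 js by move: (le_total w js jm2); rewrite (negbTE n2).
    by move: (Cc_strict j2s zjs (le_refl w js) n2); rewrite ltnNge h2.
  by rewrite le_ctrl // => h; apply: le_trans h jm2i.
have claim2 : forall i, le w js i -> (s < Cc w i)%N.
  by move=> i h; apply: (leq_trans sjs); apply: Cc_mono.
apply: (@leq_trans (Pc w' js)).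
  apply: leq_sum => i _; case: (boolP (z i && (s < Cc w' i)%N)) => // h.
  by rewrite (claim1 _ h); case/andP: h => -> _.
apply: (leq_trans (Pc_le zjs)).
apply: leq_sum => i _; case: (boolP (z i)) => zi; last by rewrite mul0n.
case: (boolP (le w js i)) => h; last by rewrite muln0.
by rewrite (claim2 _ h).
Qed.


Lemma trank_eq (phi : nat -> R) v :
  t_rank phi z v = \sum_(i < n) phi i.+1 - \sum_(i < n) (~~ z i)%:R * phi (rank v i).
Proof.
rewrite -(sum_rank phi v) /t_rank; apply/eqP; rewrite eq_sym subr_eq -big_split /=.
apply/eqP; apply: eq_bigr => i _; case: (z i) => /=; rewrite ?mul1r ?mul0r ?addr0 ?add0r //.
Qed.

Lemma trank_le (phi : nat -> R) : {homo phi : a b / (a <= b)%N >-> a <= b} ->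
  t_rank phi z w' <= t_rank phi z w.
Proof.
move=> hphi; rewrite !trank_eq lerD2l lerN2; apply: ler_sum => i _.
case: (boolP (z i)) => zi /=; first by rewrite !mul0r.
rewrite !mul1r; apply: hphi; rewrite !rank_ctrl Cc_ctrl // leq_add2l; exact: hQ.
Qed.

Lemma abel (f : nat -> R) N C :
  \sum_(s < N) ((s < C)%N)%:R * (f s.+1 - f s) = f (minn C N) - f 0.
Proof.
elim: N => [|N IH]; first by rewrite big_ord0 minn0 subrr.
rewrite big_ord_recr /= IH.
case: (ltnP N C) => h.
  have -> : minn C N.+1 = N.+1 by apply/minn_idPr.
  by rewrite mul1r addrC addrA subrK.
have -> : minn C N.+1 = C by apply/minn_idPl; apply: leqW.
by rewrite mul0r addr0.
Qed.

Lemma Cc_bnd v i : (Cc v i <= n)%N.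
Proof.
apply: (@leq_trans (\sum_(l < n) 1)%N); last by rewrite sum1_card card_ord.
by apply: leq_sum => l _; case: (z l); case: le.
Qed.

Lemma tmw_eq (phi : nat -> R) v :
  t_mw phi z v = (\sum_(i < n) (z i)%:R) * phi 0%N
     + \sum_(s < n.+1) (phi s.+1 - phi s) * (Gc v s)%:R.
Proof.
have hC i : (\sum_(j < n) (1 - z j) * psi i j (v i) (v j))%N = Cc v i.
  by apply: eq_bigr => j _; rewrite psiE; case: (z j).
have hphi i : phi (Cc v i) = phi 0%N + \sum_(s < n.+1) ((s < Cc v i)%N)%:R * (phi s.+1 - phi s).
  rewrite abel; have -> : minn (Cc v i) n.+1 = Cc v i.
    by apply/minn_idPl; apply: leqW; apply: Cc_bnd.
  by rewrite addrC subrK.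
rewrite /t_mw; under eq_bigr => i _ do rewrite hC hphi mulrDr.
rewrite big_split /= mulr_suml; congr (_ + _).
under eq_bigr => i _ do rewrite mulr_sumr.
rewrite exchange_big /=; apply: eq_bigr => s _.
rewrite /Gc natr_sum mulr_sumr; apply: eq_bigr => i _.
by case: (z i); case: (s < Cc v i)%N; rewrite /= ?mul1r ?mul0r ?mulr1 ?mulr0.
Qed.

Lemma tmw_le (phi : nat -> R) : {homo phi : a b / (a <= b)%N >-> a <= b} ->
  t_mw phi z w' <= t_mw phi z w.
Proof.
move=> hphi; rewrite !tmw_eq lerD2l; apply: ler_sum => s _.
apply: ler_wpM2l; first by rewrite subr_ge0; apply: hphi.
by rewrite ler_nat; apply: Gc_le.
Qed.

End Core.
Section Spec.
Variables (R : realType) (n : nat) (z m : 'I_n -> bool) (y : 'I_n -> \bar R)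
  (L : nat) (c kappa : R).
Hypothesis hfin : forall i, m i -> y i \is a fin_num.
Hypothesis hinf : forall i, ~~ m i -> (y i == +oo)%E || (y i == -oo)%E.
Hypothesis hL : (L <= #|N11 z m|)%N.
Hypothesis hk : 0 < kappa.

Lemma shiftE (d : 'I_n -> R) i :
  shift z m y d i = if z i && m i then (y i - (d i)%:E)%E else y i.
Proof.
rewrite /shift; case: (z i); case: (m i) => /=; rewrite ?mul1r ?mul0r ?sube0 //.
Qed.

Lemma yfin i : z i && m i -> exists r, y i = r%:E.
Proof.
case/andP=> _ /hfin; case: (y i) => // r _; by exists r.
Qed.

Lemma mem_A i : i \in A_L z m y L -> z i && m i.
Proof.
by rewrite /A_L /N11_sorted => /mem_drop; rewrite mem_sort mem_enum inE.
Qed.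

Lemma uniq_A : uniq (A_L z m y L).
Proof. by rewrite /A_L /N11_sorted drop_uniq // sort_uniq enum_uniq. Qed.

Lemma size_A : size (A_L z m y L) = L.
Proof.
have e : size (enum (N11 z m)) = #|N11 z m| by rewrite cardE.
rewrite /A_L /N11_sorted size_drop size_sort e; move: hL; lia.
Qed.

Lemma sumA : (\sum_(l < n) (l \in A_L z m y L : nat))%N = L.
Proof.
rewrite -[in RHS]size_A -(card_uniqP uniq_A) -sum1_card [in RHS]big_mkcond /=.
by apply: eq_bigr => l _; case: (_ \in _).
Qed.

Lemma A_top a l : a \in A_L z m y L -> z l && m l -> l \notin A_L z m y L -> le y l a.
Proof.
move=> aA Nl lA; apply: le_rank.
set s := N11_sorted z m y.
have srt : sorted (fun a b => (rank y a <= rank y b)%N) s.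
  by apply: sort_sorted => u v; apply: leq_total.
have tr : transitive (fun a b : 'I_n => (rank y a <= rank y b)%N).
  by move=> u v w; apply: leq_trans.
move: srt; rewrite (sorted_pairwise tr) -(cat_take_drop (#|N11 z m| - L) s).
rewrite pairwise_cat => /and3P[/allrelP h _ _].
apply: h => //.
have : l \in s by rewrite /s /N11_sorted mem_sort mem_enum inE.
rewrite -{1}(cat_take_drop (#|N11 z m| - L) s) mem_cat => /orP[//|].
by move: lA; rewrite /A_L -/s => /negbTE ->.
Qed.


Lemma gamma_bot l j : z l && m l -> ~~ z j -> y j != -oo%E ->
  (y l - (gamma z m y kappa)%:E < y j)%E.
Proof.
move=> Nl zj nj.
have [r hr] := yfin Nl.
case: (boolP (m j)) => mj; last first.
  by move: (hinf mj) nj => /orP[/eqP->|/eqP->] //; rewrite hr -EFinB ltry.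
have [s hs] : exists s, y j = s%:E.
  by move: (hfin mj); case: (y j) => // s _; exists s.
have Pj : ~~ z j && m j by rewrite zj mj.
rewrite /gamma (@bigmax_eq_arg _ _ _ (-oo)%E l (fun i => z i && m i) y Nl); last first.
  by move=> i _; apply: leNye.
case: arg_maxP => // a0 Pa0 hmax.
rewrite (@bigmin_eq_arg _ _ _ (+oo)%E j (fun i => ~~ z i && m i) y Pj); last first.
  by move=> i _; apply: leey.
case: arg_minP => // b0 Pb0 hmin.
have [ra ha] := yfin Pa0.
have [rb hb] : exists rb, y b0 = rb%:E.
  by case/andP: Pb0 => _ /hfin; case: (y b0) => // rb _; exists rb.
move: (hmax l Nl) (hmin j Pj); rewrite hr hs ha hb /= !lee_fin => h1 h2.
rewrite -!EFinB lte_fin; move: hk; lra.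
Qed.

End Spec.

Lemma ordk_shift (R : realType) (r r' c : R) i j :
  ordk (r%:E - c%:E)%E i (r'%:E - c%:E)%E j = ordk r%:E i r'%:E j.
Proof.
by rewrite /ordk -!EFinB !lte_fin !eqe ltrD2r (can_eq (subrK c)).
Qed.

Lemma ordk_mono (R : realType) (a a' b : \bar R) i j :
  (a <= a')%E -> ordk a' i b j -> ordk a i b j.
Proof.
rewrite /ordk => h /orP[lt|/andP[/eqP e ij]]; first by rewrite (le_lt_trans h lt).
move: h; rewrite e le_eqVlt => /orP[->|->] //=; by rewrite ij orbT.
Qed.

Lemma ordk_ninfty (R : realType) (a : \bar R) i j : a != -oo%E -> ordk a i -oo%E j = false.
Proof.
rewrite /ordk; case: a => //= r _; by rewrite ltNge leNye.
Qed.
Section Spec2.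
Variables (R : realType) (n : nat) (z m : 'I_n -> bool) (y : 'I_n -> \bar R)
  (L : nat) (c kappa : R).
Hypothesis hfin : forall i, m i -> y i \is a fin_num.
Hypothesis hinf : forall i, ~~ m i -> (y i == +oo)%E || (y i == -oo)%E.
Hypothesis hL : (L <= #|N11 z m|)%N.
Hypothesis hk : 0 < kappa.

Local Notation A := (A_L z m y L).
Local Notation eta := (eta_L z m y L c kappa).

Lemma Qsplit (v : 'I_n -> \bar R) j : Qc z v j =
  (\sum_(l < n) (z l && ~~ m l) * le v l j + \sum_(l < n) (z l && m l) * le v l j)%N.
Proof.
rewrite /Qc -big_split /=; apply: eq_bigr => l _.
by case: (z l); case: (m l); rewrite /= ?mul0n ?mul1n ?addn0.
Qed.

Lemma Qlem (d : 'I_n -> R) : H_L z m c L d -> forall j, ~~ z j ->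
  (Qc z (shift z m y d) j <= Qc z (shift z m y eta) j)%N.
Proof.
move=> hd j zj.
have wj v : shift z m y v j = y j by rewrite shiftE (negbTE zj).
rewrite !Qsplit; apply: leq_add.
  apply: eq_leq; apply: eq_bigr => l _.
  case: (boolP (z l && ~~ m l)) => h; last by rewrite !mul0n.
  have nN : (z l && m l) = false by move: h; case: (z l); case: (m l).
  by rewrite /le !shiftE nN (negbTE zj).
have wN v l : z l && m l -> shift z m y v l = (y l - (v l)%:E)%E by move=> h; rewrite shiftE h.
case: (boolP (y j == -oo%E)) => [/eqP yj|nj].
  rewrite big1 // => l _; case: (boolP (z l && m l)) => Nl; last by rewrite mul0n.
  have [r hr] := yfin hfin Nl.
  by rewrite /le wj yj ordk_ninfty ?muln0 // wN // hr -EFinB.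
pose wc := shift z m y (fun _ => c).
have bot l : l \in A -> le (shift z m y eta) l j.
  move=> lA; have Nl := mem_A lA; rewrite /le wj (wN _ _ Nl) /eta_L lA.
  by rewrite /ordk (gamma_bot hfin hinf hk Nl zj nj).
have eqc l : z l && m l -> l \notin A -> le (shift z m y eta) l j = le wc l j.
  by move=> Nl lA; rewrite /le /wc !wj !wN //= /eta_L (negbTE lA).
have monod l : z l && m l -> ~~ (c < d l) -> le (shift z m y d) l j -> le wc l j.
  move=> Nl hc; rewrite /le /wc !wj !wN //; apply: ordk_mono.
  have [r hr] := yfin hfin Nl; rewrite hr -!EFinB lee_fin lerB //.
  by rewrite leNgt.
case: (boolP [exists a, (a \in A) && le wc a j]) => [/existsP[a /andP[aA aj]]|none].
  apply: leq_sum => l _; case: (boolP (z l && m l)) => Nl; last by rewrite !mul0n.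
  case: (boolP (l \in A)) => lA; first by rewrite bot // muln1; case: le.
  rewrite eqc //.
  have : le wc l a.
    have := A_top aA Nl lA.
    have [r hr] := yfin hfin Nl; have [ra hra] := yfin hfin (mem_A aA).
    by rewrite /le /wc (wN _ _ Nl) (wN _ _ (mem_A aA)) hr hra ordk_shift.
  by move=> la; rewrite (le_trans la aj) muln1; case: le.
have noneA l : l \in A -> le wc l j = false.
  by move=> lA; apply/negbTE; move: none => /existsPn /(_ l); rewrite lA.
apply: (@leq_trans (\sum_(l < n) (z l && m l) * ((c < d l)%R + le wc l j))%N).
  apply: leq_sum => l _; case: (boolP (z l && m l)) => Nl; last by rewrite !mul0n.
  rewrite !mul1n; case: (boolP (c < d l)) => hc; first by case: le.
  by case: (boolP (le (shift z m y d) l j)) => // h; rewrite (monod l Nl hc h).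
have hd' : (\sum_(l < n) (z l && m l) * (c < d l)%R <= L)%N.
  move: hd; rewrite /H_L /= big_mkcond /= => h; apply: leq_trans h; apply: eq_leq.
  apply eq_bigr; move=> l _; rewrite inE.
  by case: (z l && m l); rewrite ?mul1n ?mul0n.
have hA : (\sum_(l < n) (z l && m l) * (l \in A))%N = L.
  rewrite -[RHS](@sumA R n z m y L kappa hL hk); apply eq_bigr; move=> l _.
  by case: (boolP (l \in A)) => lA; [rewrite (mem_A lA) | rewrite muln0].
have -> : (\sum_(l < n) (z l && m l) * le (shift z m y eta) l j)%N =
    (\sum_(l < n) (z l && m l) * (l \in A) + \sum_(l < n) (z l && m l) * le wc l j)%N.
  rewrite -big_split /=; apply: eq_bigr => l _.
  case: (boolP (z l && m l)) => Nl; last by rewrite !mul0n.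
  case: (boolP (l \in A)) => lA; first by rewrite bot // noneA.
  by rewrite eqc.
under eq_bigr => l _ do rewrite mulnDr.
by rewrite big_split /= hA leq_add2r.
Qed.

End Spec2.
Lemma inf_min (R : realType) (E : set R) x : E x -> (forall y, E y -> x <= y) -> inf E = x.
Proof.
move=> Ex lb; apply/eqP; rewrite eq_le; apply/andP; split.
  have hb : has_lbound E by exists x.
  exact: (ge_inf hb Ex).
by apply: lb_le_inf; [exists x | exact: lb].
Qed.

Lemma eta_H (R : realType) (n : nat) (z m : 'I_n -> bool) (y : 'I_n -> \bar R)
  (L : nat) (c kappa : R) : (L <= #|N11 z m|)%N -> 0 < kappa ->
  H_L z m c L (eta_L z m y L c kappa).
Proof.
move=> hL hk; rewrite /H_L /=.
rewrite -[X in (_ <= X)%N](@sumA R n z m y L kappa hL hk) big_mkcond /=.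
apply leq_sum; move=> i _; rewrite /eta_L.
case: (i \in N11 z m) => //.
by case: (boolP (i \in A_L z m y L)) => h; [case: (_ < _) | rewrite ltxx].
Qed.

Local Open Scope classical_set_scope.
Unset Implicit Arguments.

Theorem lemma3 (R : realType) (n : nat) (phi : nat -> R)
  (z m : 'I_n -> bool) (y : 'I_n -> \bar R) (L : nat) (c kappa : R) :
  {homo phi : a b / (a <= b)%N >-> a <= b} ->
  (forall i, m i -> y i \is a fin_num) ->
  (forall i, ~~ m i -> (y i == +oo)%E || (y i == -oo)%E) ->
  (L <= #|N11 z m|)%N ->
  0 < kappa ->
  inf [set t_rank phi z (shift z m y d) | d in H_L z m c L]
    = t_rank phi z (shift z m y (eta_L z m y L c kappa))
  /\
  inf [set t_mw phi z (shift z m y d) | d in H_L z m c L]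
    = t_mw phi z (shift z m y (eta_L z m y L c kappa)).
Proof.
move=> hphi hfin hinf hL hk.
have hw (d : 'I_n -> R) j : ~~ z j ->
    shift z m y d j = shift z m y (eta_L z m y L c kappa) j.
  by move=> zj; rewrite !shiftE (negbTE zj).
split; apply: inf_min.
- by exists (eta_L z m y L c kappa) => //; apply: eta_H.
- move=> _ [d hd <-].
  exact: (trank_le (hw d) (Qlem hfin hinf hL hk hd) hphi).
- by exists (eta_L z m y L c kappa) => //; apply: eta_H.
- move=> _ [d hd <-].
  exact: (tmw_le (hw d) (Qlem hfin hinf hL hk hd) hphi).
Qed.
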